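(* On six qubits let $|\Psi\rangle_6=\tfrac{1}{\sqrt2}(|0\rangle_6+|\overline{\mathrm{D}}\rangle_6)$ with $|\overline{\mathrm{D}}\rangle_6=\tfrac13\sum_{\{i,j\}\in P}|ij\rangle_6$, $P=\{\{1,3\},\{1,4\},\{1,5\},\{2,4\},\{2,5\},\{2,6\},\{3,5\},\{3,6\},\{4,6\}\}$. Let $\mathcal{G}_6$ be the group of unitaries on $(\mathbb{C}^2)^{\otimes6}$ generated by the cyclic qubit permutation $P_c$ (mapping the qubit order $(123456)\mapsto(234561)$) and the reflection $R$ (mapping $(123456)\mapsto(654321)$). Then there is no Hermitian operator $\overline{H}$ on $(\mathbb{C}^2)^{\otimes6}$ of the form $\overline{H}=\sum_{\{i,j\}}\overline{H}_{\{i,j\}}\otimes I_{\text{rest}}$ (sum over two-element subsets $\{i,j\}\subset\{1,\dots,6\}$, each $\overline{H}_{\{i,j\}}$ acting on qubits $i,j$) satisfying $G^\dagger\overline{H}G=\overline{H}$ for all $G\in\mathcal{G}_6$ and having $|\Psi\rangle_6$ as its unique ground state.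
   Context: $|0\rangle_6=|0\rangle^{\otimes6}$ and $|ij\rangle_6$ is the computational basis state with qubits $i,j$ in $|1\rangle$ and all others in $|0\rangle$. Qubit permutations act as unitaries permuting tensor factors. A Hermitian operator has $|\psi\rangle$ as its unique ground state if the eigenspace of its smallest eigenvalue is $\mathrm{span}\{|\psi\rangle\}$. *)

(* Defs.v *)
(* complex numbers modelled by algC (algebraic complex numbers). *)
From mathcomp Require Import all_boot all_order all_algebra all_field.
Set Implicit Arguments. Unset Strict Implicit. Unset Printing Implicit Defensive.
Import Order.TTheory GRing.Theory Num.Theory.
Local Open Scope ring_scope.

(* Computational basis of six qubits: bit strings x : 'I_6 -> bool;
   qubit k (1-based in the paper) is index k-1 here. *)
Definition bits := {ffun 'I_6 -> bool}.
Definition dim6 := #|{: bits}|.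

Definition opOf (f : bits -> bits -> algC) : 'M[algC]_dim6 :=
  \matrix_(a, b) f (enum_val a) (enum_val b).
Definition vecOf (f : bits -> algC) : 'cV[algC]_dim6 :=
  \col_a f (enum_val a).

Definition adjM n (A : 'M[algC]_n) : 'M[algC]_n := (map_mx (fun z => z^*) A)^T.
Definition herm_op n (A : 'M[algC]_n) : Prop := adjM A = A.

Definition lidx (bi bj : bool) : 'I_4 := inord (2 * bi + bj).

Definition embed2 (i j : 'I_6) (h : 'M[algC]_4) : 'M[algC]_dim6 :=
  opOf (fun x y =>
    if [forall k, (k != i) && (k != j) ==> (x k == y k)]
    then h (lidx (x i) (x j)) (lidx (y i) (y j)) else 0).

Definition permOp (s : 'I_6 -> 'I_6) : 'M[algC]_dim6 :=
  opOf (fun x y => if [forall k, x k == y (s k)] then 1 else 0).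

Definition Pc : 'M[algC]_dim6 := permOp (fun k => inord ((k.+1) %% 6)).
Definition Rf : 'M[algC]_dim6 := permOp (fun k => inord (5 - k)).

(* The group generated by Pc and Rf: all finite products of generators
   and their inverses (= adjoints). *)
Inductive inG6 : 'M[algC]_dim6 -> Prop :=
| inG6_1 : inG6 1%:M
| inG6_Pc G : inG6 G -> inG6 (Pc *m G)
| inG6_Rf G : inG6 G -> inG6 (Rf *m G)
| inG6_Pci G : inG6 G -> inG6 (adjM Pc *m G)
| inG6_Rfi G : inG6 G -> inG6 (adjM Rf *m G).

Definition ket (x : bits) : 'cV[algC]_dim6 := vecOf (fun y => if y == x then 1 else 0).
Definition ket0 : 'cV[algC]_dim6 := ket [ffun _ => false].
Definition ket2 (i j : 'I_6) : 'cV[algC]_dim6 := ket [ffun k => (k == i) || (k == j)].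

Definition Ppairs : seq ('I_6 * 'I_6) :=
  [:: (inord 0, inord 2); (inord 0, inord 3); (inord 0, inord 4);
      (inord 1, inord 3); (inord 1, inord 4); (inord 1, inord 5);
      (inord 2, inord 4); (inord 2, inord 5); (inord 3, inord 5)].

Definition Dbar6 : 'cV[algC]_dim6 := 3^-1 *: \sum_(p <- Ppairs) ket2 p.1 p.2.
Definition Psi6 : 'cV[algC]_dim6 := (sqrtC 2)^-1 *: (ket0 + Dbar6).

Definition is_eigenvalue n (H : 'M[algC]_n) (l : algC) : Prop :=
  exists2 v : 'cV[algC]_n, v != 0 & H *m v = l *: v.

Definition unique_ground_state n (H : 'M[algC]_n) (psi : 'cV[algC]_n) : Prop :=
  exists l : algC,
    [/\ is_eigenvalue H l,
        (forall m, is_eigenvalue H m -> l <= m) &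
        (forall v : 'cV[algC]_n, H *m v = l *: v <-> exists c : algC, v = c *: psi)].

Definition two_body (H : 'M[algC]_dim6) : Prop :=
  exists hs : 'I_6 -> 'I_6 -> 'M[algC]_4,
    H = \sum_(i < 6) \sum_(j < 6 | (i < j)%N) embed2 i j (hs i j).

(* Main.v *)
Require Import Defs.
From mathcomp Require Import all_boot all_order all_algebra all_field.
From mathcomp Require Import ring.
Import GRing.Theory Num.Theory.
Local Open Scope ring_scope.
Set Implicit Arguments. Unset Strict Implicit. Unset Printing Implicit Defensive.
Definition bN (n : nat) : bits := [ffun k : 'I_6 => odd (n %/ 2 ^ k)].
Lemma bNE n k : bN n k = odd (n %/ 2 ^ k). Proof. by rewrite ffunE. Qed.
Definition flip (B : 'I_6) (x : bits) : bits := [ffun k => if k == B then ~~ x k else x k].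
Definition fs (s : 'I_6 -> 'I_6) (x : bits) : bits := [ffun k => x (s k)].
Definition o0 : 'I_6 := @Ordinal 6 0 isT.
Definition o1 : 'I_6 := @Ordinal 6 1 isT.
Definition o2 : 'I_6 := @Ordinal 6 2 isT.
Definition o3 : 'I_6 := @Ordinal 6 3 isT.
Definition o4 : 'I_6 := @Ordinal 6 4 isT.
Definition o5 : 'I_6 := @Ordinal 6 5 isT.
Ltac bits_eq := apply/ffunP => -[[|[|[|[|[|[|//]]]]]] Hk]; rewrite ?ffunE ?bNE ?ffunE ?bNE -?val_eqE /= ?inordK //=.
Lemma neqP' (a b : 'I_6) : (a != b) \/ (a = b).
Proof. by case: (eqVneq a b); [right|left]. Qed.

Definition agree (i j : 'I_6) (x y : bits) := [forall k, (k != i) && (k != j) ==> (x k == y k)].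
Definition term (hs : 'I_6 -> 'I_6 -> 'M[algC]_4) i j (x y : bits) :=
  if agree i j x y then hs i j (lidx (x i) (x j)) (lidx (y i) (y j)) else 0.
Definition Hb hs (x y : bits) := \sum_(i < 6) \sum_(j < 6 | (i < j)%N) term hs i j x y.

Lemma TZ hs i j (x y : bits) (p : 'I_6) : p != i -> p != j -> x p != y p -> term hs i j x y = 0.
Proof.
move=> pi pj xy; rewrite /term; case: ifP => // /forallP /(_ p).
by rewrite pi pj /= (negPf xy).
Qed.

Lemma TL hs (i j : 'I_6) (x y x' y' : bits) :
  (forall k, k != i -> k != j -> (x k == y k) = (x' k == y' k)) ->
  x i = x' i -> x j = x' j -> y i = y' i -> y j = y' j ->
  term hs i j x y = term hs i j x' y'.
Proof.
move=> E e1 e2 e3 e4; rewrite /term e1 e2 e3 e4.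
have -> : agree i j x y = agree i j x' y'.
  apply: eq_forallb => k; case: (boolP (k != i)) => //= ki.
  case: (boolP (k != j)) => //= kj; exact: E.
by [].
Qed.

Lemma HbZ hs (x y : bits) (p q r : 'I_6) : p != q -> p != r -> q != r ->
  x p != y p -> x q != y q -> x r != y r -> Hb hs x y = 0.
Proof.
move=> pq pr qr xp xq xr; rewrite /Hb big1 // => i _; rewrite big1 // => j ij.
have [pi|pi] := neqP' p i.
  have [pj|pj] := neqP' p j; first exact: (TZ _ pi pj).
  subst j.
  have [qi|qi] := neqP' q i; first by apply: (TZ _ qi _ xq); rewrite eq_sym.
  subst i. apply: (@TZ _ _ _ _ _ r) => //; by rewrite eq_sym.
subst i.
have [qj|qj] := neqP' q j; first by apply: (TZ _ _ qj xq); rewrite eq_sym.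
subst j. apply: (@TZ _ _ _ _ _ r) => //; by rewrite eq_sym.
Qed.

Lemma HbPair hs (x y x' y' : bits) (p q : 'I_6) : p != q ->
  (forall k, (k != p) && (k != q) ==> (x k == y k) && (x' k == y' k)) ->
  x p != y p -> x q != y q -> x p = x' p -> x q = x' q -> y p = y' p -> y q = y' q ->
  Hb hs x y = Hb hs x' y'.
Proof.
move=> pq E xp xq e1 e2 e3 e4.
have xp' : x' p != y' p by rewrite -e1 -e3.
have xq' : x' q != y' q by rewrite -e2 -e4.
rewrite /Hb; apply: eq_bigr => i _; apply: eq_bigr => j ij.
have ij' : i != j by rewrite neq_ltn ij.
have [pi|pi] := neqP' p i.
  have [pj|pj] := neqP' p j; first by rewrite (TZ _ pi pj xp) (TZ _ pi pj xp').
  subst j.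
  have [qi|qi] := neqP' q i.
    by rewrite (TZ _ qi _ xq) ?(TZ _ qi _ xq') // eq_sym.
  subst i. apply: TL => //.
  move=> k kq kp; have /andP[/eqP e5 /eqP e6] : (x k == y k) && (x' k == y' k) by move: (E k); rewrite kp kq.
  by rewrite e5 e6 !eqxx.
subst i.
have [qj|qj] := neqP' q j.
  by rewrite (TZ _ _ qj xq) ?(TZ _ _ qj xq') // eq_sym.
subst j. apply: TL => //.
move=> k kp kq; have /andP[/eqP e5 /eqP e6] : (x k == y k) && (x' k == y' k) by move: (E k); rewrite kp kq.
by rewrite e5 e6 !eqxx.
Qed.

Lemma flipC (A B : 'I_6) (x : bits) : flip A (flip B x) = flip B (flip A x).
Proof.
apply/ffunP => k; rewrite !ffunE.
by case: (k == A); case: (k == B).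
Qed.

Lemma TF hs (i j : 'I_6) (x y : bits) (B : 'I_6) : B != i -> B != j ->
  term hs i j (flip B x) (flip B y) = term hs i j x y.
Proof.
move=> Bi Bj; apply: TL; rewrite ?ffunE.
- move=> k _ _; rewrite !ffunE; case: (k == B) => //.
  by case: (x k); case: (y k).
all: by rewrite ?ffunE eq_sym ?(negPf Bi) ?(negPf Bj).
Qed.

Lemma HbAff hs (x y : bits) (m A B : 'I_6) : m != A -> m != B -> A != B -> x m != y m ->
  Hb hs (flip A (flip B x)) (flip A (flip B y)) - Hb hs (flip A x) (flip A y)
  - Hb hs (flip B x) (flip B y) + Hb hs x y = 0.
Proof.
move=> mA mB AB xm.
have BA : B != A by rewrite eq_sym.
rewrite /Hb -!sumrB -big_split /= big1 // => i _.
rewrite -!sumrB -big_split /= big1 // => j ij.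
have fm C z : C != m -> flip C z m = z m by move=> Cm; rewrite ffunE eq_sym (negPf Cm).
have [Ai|Ai] := neqP' A i.
  have [Aj|Aj] := neqP' A j.
    rewrite (@TF _ _ _ (flip B x) (flip B y) A) // (@TF _ _ _ x y A) //; ring.
  subst j.
  have [Bi|Bi] := neqP' B i.
    rewrite flipC (flipC A B y) (@TF _ _ _ (flip A x) (flip A y) B) // (@TF _ _ _ x y B) //; ring.
  subst i. rewrite !(@TZ _ _ _ _ _ m) ?subrr ?addr0 // 1?eq_sym //; by rewrite ?fm // eq_sym.
subst i.
have [Bj|Bj] := neqP' B j.
  rewrite flipC (flipC A B y) (@TF _ _ _ (flip A x) (flip A y) B) // (@TF _ _ _ x y B) //; ring.
subst j. rewrite !(@TZ _ _ _ _ _ m) ?subrr ?addr0 // 1?eq_sym //; by rewrite ?fm // eq_sym.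
Qed.
Definition Hf (H : 'M[algC]_dim6) (x y : bits) := H (enum_rank x) (enum_rank y).

Lemma Hf_Hb (H : 'M[algC]_dim6) hs :
  H = \sum_(i < 6) \sum_(j < 6 | (i < j)%N) embed2 i j (hs i j) ->
  forall x y, Hf H x y = Hb hs x y.
Proof.
move=> -> x y; rewrite /Hf /Hb summxE; apply: eq_bigr => i _.
rewrite summxE; apply: eq_bigr => j _.
by rewrite /embed2 /opOf mxE !enum_rankK.
Qed.

Lemma perm_entry s (w b : 'I_dim6) :
  permOp s w b = (w == enum_rank (fs s (enum_val b)))%:R.
Proof.
rewrite /permOp /opOf mxE.
have -> : [forall k, enum_val w k == enum_val b (s k)] = (w == enum_rank (fs s (enum_val b))).
  rewrite -(inj_eq enum_val_inj) enum_rankK.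
  apply/idP/idP.
    move=> /forallP E; apply/eqP/ffunP => k; rewrite ffunE; exact/eqP/E.
  by move=> /eqP ->; apply/forallP => k; rewrite ffunE.
by case: (_ == _).
Qed.

Lemma conj_nat (b : bool) : (b%:R : algC)^* = b%:R.
Proof. by case: b; rewrite ?conjC1 ?conjC0. Qed.

Lemma sum_deltar n (F : 'I_n -> algC) a : \sum_j F j * (j == a)%:R = F a.
Proof.
rewrite (bigD1 a) //= eqxx mulr1 big1 ?addr0 // => j /negPf ->; by rewrite mulr0.
Qed.

Lemma sum_deltal n (F : 'I_n -> algC) a : \sum_j (j == a)%:R * F j = F a.
Proof.
rewrite (bigD1 a) //= eqxx mul1r big1 ?addr0 // => j /negPf ->; by rewrite mul0r.
Qed.

Lemma adjM_entry n (A : 'M[algC]_n) i j : adjM A i j = (A j i)^*.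
Proof. by rewrite /adjM !mxE. Qed.

Lemma perm_inv s (H : 'M[algC]_dim6) :
  adjM (permOp s) *m H *m permOp s = H ->
  forall x y, Hf H (fs s x) (fs s y) = Hf H x y.
Proof.
move=> E x y; rewrite /Hf -{2}E mxE.
under eq_bigr => j _ do rewrite (perm_entry s j (enum_rank y)) enum_rankK.
rewrite sum_deltar mxE.
under eq_bigr => u _ do rewrite adjM_entry (perm_entry s u (enum_rank x)) enum_rankK conj_nat.
by rewrite sum_deltal.
Qed.

Lemma herm_entry (H : 'M[algC]_dim6) : herm_op H -> forall x y, Hf H y x = (Hf H x y)^*.
Proof.
move=> E x y; by rewrite /Hf -{1}E adjM_entry.
Qed.

Lemma mulket (H : 'M[algC]_dim6) y x : (H *m ket y) (enum_rank x) 0 = Hf H x y.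
Proof.
rewrite mxE (bigD1 (enum_rank y)) //= big1 ?addr0; last first.
  move=> b bn; rewrite /ket /vecOf mxE.
  case: eqP => [e|]; last by rewrite mulr0.
  by move: bn; rewrite -e enum_valK eqxx.
by rewrite /ket /vecOf mxE enum_rankK eqxx mulr1.
Qed.
Lemma mulketE (H : 'M[algC]_dim6) y : H *m ket y = vecOf (fun x => Hf H x y).
Proof. apply/colP => a; rewrite -[a]enum_valK mulket /vecOf mxE !enum_valK. by []. Qed.

Lemma z0 : [ffun _ => false] = bN 0 :> bits.
Proof. bits_eq. Qed.
Lemma p5 : [ffun k : 'I_6 => (k == inord 0) || (k == inord 2)] = bN 5. Proof. bits_eq. Qed.
Lemma p9 : [ffun k : 'I_6 => (k == inord 0) || (k == inord 3)] = bN 9. Proof. bits_eq. Qed.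
Lemma p17 : [ffun k : 'I_6 => (k == inord 0) || (k == inord 4)] = bN 17. Proof. bits_eq. Qed.
Lemma p10 : [ffun k : 'I_6 => (k == inord 1) || (k == inord 3)] = bN 10. Proof. bits_eq. Qed.
Lemma p18 : [ffun k : 'I_6 => (k == inord 1) || (k == inord 4)] = bN 18. Proof. bits_eq. Qed.
Lemma p34 : [ffun k : 'I_6 => (k == inord 1) || (k == inord 5)] = bN 34. Proof. bits_eq. Qed.
Lemma p20 : [ffun k : 'I_6 => (k == inord 2) || (k == inord 4)] = bN 20. Proof. bits_eq. Qed.
Lemma p36 : [ffun k : 'I_6 => (k == inord 2) || (k == inord 5)] = bN 36. Proof. bits_eq. Qed.
Lemma p40 : [ffun k : 'I_6 => (k == inord 3) || (k == inord 5)] = bN 40. Proof. bits_eq. Qed.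

Definition Plist := [:: 5; 9; 17; 10; 18; 34; 20; 36; 40]%N.

Lemma eig_entry (H : 'M[algC]_dim6) l x : H *m Psi6 = l *: Psi6 ->
  3 * Hf H x (bN 0) + \sum_(m <- Plist) Hf H x (bN m) =
  l * (3 * (if x == bN 0 then 1 else 0) + \sum_(m <- Plist) (if x == bN m then 1 else 0)).
Proof.
move=> HP.
have e := congr1 (fun M : 'cV_dim6 => M (enum_rank x) 0) HP.
move: e; rewrite /Psi6 /Dbar6 -!scalemxAr mulmxDr -scalemxAr mulmx_sumr.

rewrite /Ppairs /Plist !big_cons !big_nil /ket2 /ket0 !mulketE.
rewrite z0 p5 p9 p17 p10 p18 p34 p20 p36 p40.
rewrite !mxE !enum_rankK => e.
have s0 : sqrtC 2 != 0 :> algC by rewrite sqrtC_eq0 pnatr_eq0.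
have t0 : (3 : algC) != 0 by rewrite pnatr_eq0.
set A := Hf H x (bN 0) in e *.
set B := (Hf H x (bN 5) + _) in e *.
set C := (if x == bN 0 then 1 else 0) in e *.
set D := ((if x == bN 5 then 1 else 0) + _) in e *.
transitivity (3 * sqrtC 2 * ((sqrtC 2)^-1 * (A + 3^-1 * B))).
  by field.
by rewrite e; field.
Qed.
Lemma bN_all n (f : nat -> bool) : all (fun k => odd (n %/ 2 ^ k) == f k) (iota 0 6) ->
  forall k : 'I_6, bN n k = f k.
Proof.
move=> /allP Hall k; rewrite bNE; apply/eqP/Hall.
by rewrite mem_iota add0n ltn_ord.
Qed.

Lemma inord_eq (k : 'I_6) (A : nat) : (A < 6)%N -> (k == inord A) = (nat_of_ord k == A).
Proof. by move=> A6; rewrite -val_eqE /= inordK. Qed.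

Lemma FZn (F : bits -> bits -> algC) hs (FH : forall x y, F x y = Hb hs x y)
  (a b p q r : nat) :
  (p < 6)%N -> (q < 6)%N -> (r < 6)%N -> p != q -> p != r -> q != r ->
  odd (a %/ 2 ^ p) != odd (b %/ 2 ^ p) -> odd (a %/ 2 ^ q) != odd (b %/ 2 ^ q) ->
  odd (a %/ 2 ^ r) != odd (b %/ 2 ^ r) ->
  F (bN a) (bN b) = 0.
Proof.
move=> p6 q6 r6 pq pr qr hp hq hr.
rewrite FH (@HbZ hs _ _ (inord p) (inord q) (inord r)) //.
all: try (by rewrite inord_eq // inordK).
all: by rewrite !bNE inordK.
Qed.

Lemma FPairn (F : bits -> bits -> algC) hs (FH : forall x y, F x y = Hb hs x y)
  (a b a' b' p q : nat) : (p < 6)%N -> (q < 6)%N -> p != q ->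
  all (fun k => (k == p) || (k == q) ||
     ((odd (a %/ 2 ^ k) == odd (b %/ 2 ^ k)) && (odd (a' %/ 2 ^ k) == odd (b' %/ 2 ^ k)))) (iota 0 6) ->
  odd (a %/ 2 ^ p) != odd (b %/ 2 ^ p) -> odd (a %/ 2 ^ q) != odd (b %/ 2 ^ q) ->
  odd (a %/ 2 ^ p) == odd (a' %/ 2 ^ p) -> odd (a %/ 2 ^ q) == odd (a' %/ 2 ^ q) ->
  odd (b %/ 2 ^ p) == odd (b' %/ 2 ^ p) -> odd (b %/ 2 ^ q) == odd (b' %/ 2 ^ q) ->
  F (bN a) (bN b) = F (bN a') (bN b').
Proof.
move=> p6 q6 pq /allP Hall h1 h2 h3 h4 h5 h6.
rewrite !FH; apply: (@HbPair hs _ _ _ _ (inord p) (inord q)).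
- by rewrite inord_eq // inordK.
- move=> k; rewrite !inord_eq //; apply/implyP => /andP[kp kq].
  have := Hall k; rewrite mem_iota add0n ltn_ord => /(_ isT).
  by rewrite (negPf kp) (negPf kq) /= !bNE.
all: rewrite !bNE inordK //; exact/eqP.
Qed.
Lemma flip1_eq (A n n' : nat) : (A < 6)%N ->
  all (fun k => odd (n' %/ 2 ^ k) == (if k == A then ~~ odd (n %/ 2 ^ k) else odd (n %/ 2 ^ k))) (iota 0 6) ->
  bN n' = flip (inord A) (bN n).
Proof.
move=> A6 /bN_all E; apply/ffunP => k; rewrite E !ffunE inord_eq // ?bNE.
Qed.

Lemma flip2_eq (A B n n' : nat) : (A < 6)%N -> (B < 6)%N -> A != B ->
  all (fun k => odd (n' %/ 2 ^ k) == (if (k == A) || (k == B) then ~~ odd (n %/ 2 ^ k) else odd (n %/ 2 ^ k))) (iota 0 6) ->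
  bN n' = flip (inord A) (flip (inord B) (bN n)).
Proof.
move=> A6 B6 AB /bN_all E; apply/ffunP => k; rewrite E !ffunE !inord_eq // ?bNE.
case: eqP => [kA|] /=; case: eqP => [kB|] //=.
by move: AB; rewrite -kA -kB eqxx.
Qed.

Lemma FAffn (F : bits -> bits -> algC) hs (FH : forall x y, F x y = Hb hs x y)
  (x y m A B x1 y1 x2 y2 x3 y3 : nat) :
  (m < 6)%N -> (A < 6)%N -> (B < 6)%N -> m != A -> m != B -> A != B ->
  odd (x %/ 2 ^ m) != odd (y %/ 2 ^ m) ->
  all (fun k => odd (x1 %/ 2 ^ k) == (if (k == A) || (k == B) then ~~ odd (x %/ 2 ^ k) else odd (x %/ 2 ^ k))) (iota 0 6) ->
  all (fun k => odd (y1 %/ 2 ^ k) == (if (k == A) || (k == B) then ~~ odd (y %/ 2 ^ k) else odd (y %/ 2 ^ k))) (iota 0 6) ->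
  all (fun k => odd (x2 %/ 2 ^ k) == (if k == A then ~~ odd (x %/ 2 ^ k) else odd (x %/ 2 ^ k))) (iota 0 6) ->
  all (fun k => odd (y2 %/ 2 ^ k) == (if k == A then ~~ odd (y %/ 2 ^ k) else odd (y %/ 2 ^ k))) (iota 0 6) ->
  all (fun k => odd (x3 %/ 2 ^ k) == (if k == B then ~~ odd (x %/ 2 ^ k) else odd (x %/ 2 ^ k))) (iota 0 6) ->
  all (fun k => odd (y3 %/ 2 ^ k) == (if k == B then ~~ odd (y %/ 2 ^ k) else odd (y %/ 2 ^ k))) (iota 0 6) ->
  F (bN x1) (bN y1) - F (bN x2) (bN y2) - F (bN x3) (bN y3) + F (bN x) (bN y) = 0.
Proof.
move=> m6 A6 B6 mA mB AB xy h1 h2 h3 h4 h5 h6.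
rewrite (flip2_eq A6 B6 AB h1) (flip2_eq A6 B6 AB h2) (flip1_eq A6 h3) (flip1_eq A6 h4).
rewrite (flip1_eq B6 h5) (flip1_eq B6 h6) !FH.
apply: (@HbAff hs _ _ (inord m)).
all: try (by rewrite inord_eq // inordK).
all: by rewrite !bNE inordK.
Qed.

Definition sP (k : 'I_6) : 'I_6 := inord ((k.+1) %% 6).
Definition sR (k : 'I_6) : 'I_6 := inord (5 - k).

Lemma Gk (F : bits -> bits -> algC)
  (Fs : forall x y, F (fs sP x) (fs sP y) = F x y)
  (Fr : forall x y, F (fs sR x) (fs sR y) = F x y) k (r : bool) a b c d :
  iter k (fs sP) (if r then fs sR a else a) = c ->
  iter k (fs sP) (if r then fs sR b else b) = d -> F a b = F c d.
Proof.
move=> <- <-; elim: k => [|k IH] /=; last by rewrite Fs.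
by case: r; rewrite ?Fr.
Qed.

Ltac bits_eq2 := apply/ffunP => -[[|[|[|[|[|[|//]]]]]] Hk]; rewrite /=;
  do ?[rewrite ffunE | rewrite bNE | rewrite inordK //]; rewrite -?val_eqE /= ?inordK //=.

Lemma bN_neqE (a b k : nat) : (k < 6)%N -> odd (a %/ 2 ^ k) != odd (b %/ 2 ^ k) ->
  (bN a == bN b) = false.
Proof.
move=> k6 h; apply/negbTE/eqP => /ffunP /(_ (inord k)).
by rewrite !ffunE inordK //; apply/eqP.
Qed.

Lemma iffalse (T : Type) (u v : T) : (if false then u else v) = v. Proof. by []. Qed.
Lemma iftrue (T : Type) (u v : T) : (if true then u else v) = u. Proof. by []. Qed.

Lemma eq_lin (P Q R : algC) : P = Q -> R = P - Q -> R = 0.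
Proof. by move=> -> ->; rewrite subrr. Qed.

Lemma aff_rw (u v w z : algC) : u - v - w + z = 0 -> u = v + w - z.
Proof. by move=> h; apply/eqP; rewrite -subr_eq0 -h; apply/eqP; ring. Qed.

Lemma bits_enum (x : bits) :
  x = bN (x o0 + 2 * x o1 + 4 * x o2 + 8 * x o3 + 16 * x o4 + 32 * x o5)%N.
Proof.
apply/ffunP => -[[|[|[|[|[|[|//]]]]]] Hk]; rewrite bNE.
- have -> : Ordinal Hk = o0 by apply: val_inj.
  by case: (x o0); case: (x o1); case: (x o2); case: (x o3); case: (x o4); case: (x o5).
- have -> : Ordinal Hk = o1 by apply: val_inj.
  by case: (x o0); case: (x o1); case: (x o2); case: (x o3); case: (x o4); case: (x o5).
- have -> : Ordinal Hk = o2 by apply: val_inj.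
  by case: (x o0); case: (x o1); case: (x o2); case: (x o3); case: (x o4); case: (x o5).
- have -> : Ordinal Hk = o3 by apply: val_inj.
  by case: (x o0); case: (x o1); case: (x o2); case: (x o3); case: (x o4); case: (x o5).
- have -> : Ordinal Hk = o4 by apply: val_inj.
  by case: (x o0); case: (x o1); case: (x o2); case: (x o3); case: (x o4); case: (x o5).
- have -> : Ordinal Hk = o5 by apply: val_inj.
  by case: (x o0); case: (x o1); case: (x o2); case: (x o3); case: (x o4); case: (x o5).
Qed.

Lemma bits_all (P : bits -> Prop) : (forall n, (n < 64)%N -> P (bN n)) -> forall x, P x.
Proof.
move=> h x; rewrite (bits_enum x); apply: h.
by case: (x o0); case: (x o1); case: (x o2); case: (x o3); case: (x o4); case: (x o5).
Qed.
Lemma psi_entry x : Psi6 (enum_rank x) 0 =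
  (sqrtC 2)^-1 * ((if x == bN 0 then 1 else 0) + 3^-1 * \sum_(m <- Plist) (if x == bN m then 1 else 0)).
Proof.
rewrite /Psi6 /Dbar6 /Ppairs /Plist !big_cons !big_nil /ket2 /ket0.
rewrite z0 p5 p9 p17 p10 p18 p34 p20 p36 p40.
by rewrite !mxE !enum_rankK.
Qed.
Ltac killig := repeat match goal with
 | |- context [bN ?a == bN ?b] => first [
   rewrite (@bN_neqE a b 0 isT isT) | rewrite (@bN_neqE a b 1 isT isT)
 | rewrite (@bN_neqE a b 2 isT isT) | rewrite (@bN_neqE a b 3 isT isT)
 | rewrite (@bN_neqE a b 4 isT isT) | rewrite (@bN_neqE a b 5 isT isT)
 | rewrite (eqxx (bN a)) ] end; rewrite ?iffalse ?iftrue.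
Ltac zg FH := match goal with |- Hf _ (bN ?a) (bN ?b) = 0 => first [
   exact (@FZn _ _ FH a b 0 1 2 isT isT isT isT isT isT isT isT isT)
 | exact (@FZn _ _ FH a b 0 1 3 isT isT isT isT isT isT isT isT isT)
 | exact (@FZn _ _ FH a b 0 1 4 isT isT isT isT isT isT isT isT isT)
 | exact (@FZn _ _ FH a b 0 1 5 isT isT isT isT isT isT isT isT isT)
 | exact (@FZn _ _ FH a b 0 2 3 isT isT isT isT isT isT isT isT isT)
 | exact (@FZn _ _ FH a b 0 2 4 isT isT isT isT isT isT isT isT isT)
 | exact (@FZn _ _ FH a b 0 2 5 isT isT isT isT isT isT isT isT isT)
 | exact (@FZn _ _ FH a b 0 3 4 isT isT isT isT isT isT isT isT isT)
 | exact (@FZn _ _ FH a b 0 3 5 isT isT isT isT isT isT isT isT isT)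
 | exact (@FZn _ _ FH a b 0 4 5 isT isT isT isT isT isT isT isT isT)
 | exact (@FZn _ _ FH a b 1 2 3 isT isT isT isT isT isT isT isT isT)
 | exact (@FZn _ _ FH a b 1 2 4 isT isT isT isT isT isT isT isT isT)
 | exact (@FZn _ _ FH a b 1 2 5 isT isT isT isT isT isT isT isT isT)
 | exact (@FZn _ _ FH a b 1 3 4 isT isT isT isT isT isT isT isT isT)
 | exact (@FZn _ _ FH a b 1 3 5 isT isT isT isT isT isT isT isT isT)
 | exact (@FZn _ _ FH a b 1 4 5 isT isT isT isT isT isT isT isT isT)
 | exact (@FZn _ _ FH a b 2 3 4 isT isT isT isT isT isT isT isT isT)
 | exact (@FZn _ _ FH a b 2 3 5 isT isT isT isT isT isT isT isT isT)
 | exact (@FZn _ _ FH a b 2 4 5 isT isT isT isT isT isT isT isT isT)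
 | exact (@FZn _ _ FH a b 3 4 5 isT isT isT isT isT isT isT isT isT) ] end.
Ltac solve_case FH := killig; rewrite ?mulr0 ?mulr1; first [ assumption | zg FH ].
Ltac killz FH e := repeat match type of e with
 | context [Hf ?H (bN ?a) (bN ?b)] => first [
   rewrite (@FZn _ _ FH a b 0 1 2 isT isT isT isT isT isT isT isT isT) in e
   | rewrite (@FZn _ _ FH a b 0 1 3 isT isT isT isT isT isT isT isT isT) in e
   | rewrite (@FZn _ _ FH a b 0 1 4 isT isT isT isT isT isT isT isT isT) in e
   | rewrite (@FZn _ _ FH a b 0 1 5 isT isT isT isT isT isT isT isT isT) in e
   | rewrite (@FZn _ _ FH a b 0 2 3 isT isT isT isT isT isT isT isT isT) in e
   | rewrite (@FZn _ _ FH a b 0 2 4 isT isT isT isT isT isT isT isT isT) in e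
   | rewrite (@FZn _ _ FH a b 0 2 5 isT isT isT isT isT isT isT isT isT) in e
   | rewrite (@FZn _ _ FH a b 0 3 4 isT isT isT isT isT isT isT isT isT) in e
   | rewrite (@FZn _ _ FH a b 0 3 5 isT isT isT isT isT isT isT isT isT) in e
   | rewrite (@FZn _ _ FH a b 0 4 5 isT isT isT isT isT isT isT isT isT) in e
   | rewrite (@FZn _ _ FH a b 1 2 3 isT isT isT isT isT isT isT isT isT) in e
   | rewrite (@FZn _ _ FH a b 1 2 4 isT isT isT isT isT isT isT isT isT) in e
   | rewrite (@FZn _ _ FH a b 1 2 5 isT isT isT isT isT isT isT isT isT) in e
   | rewrite (@FZn _ _ FH a b 1 3 4 isT isT isT isT isT isT isT isT isT) in e
   | rewrite (@FZn _ _ FH a b 1 3 5 isT isT isT isT isT isT isT isT isT) in e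
   | rewrite (@FZn _ _ FH a b 1 4 5 isT isT isT isT isT isT isT isT isT) in e
   | rewrite (@FZn _ _ FH a b 2 3 4 isT isT isT isT isT isT isT isT isT) in e
   | rewrite (@FZn _ _ FH a b 2 3 5 isT isT isT isT isT isT isT isT isT) in e
   | rewrite (@FZn _ _ FH a b 2 4 5 isT isT isT isT isT isT isT isT isT) in e
   | rewrite (@FZn _ _ FH a b 3 4 5 isT isT isT isT isT isT isT isT isT) in e
   ] end.
Ltac killi e := repeat match type of e with
 | context [bN ?a == bN ?b] => first [
   rewrite (@bN_neqE a b 0 isT isT) in e
   | rewrite (@bN_neqE a b 1 isT isT) in e
   | rewrite (@bN_neqE a b 2 isT isT) in e
   | rewrite (@bN_neqE a b 3 isT isT) in e
   | rewrite (@bN_neqE a b 4 isT isT) in e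
   | rewrite (@bN_neqE a b 5 isT isT) in e
   | rewrite (eqxx (bN a)) in e ] end; rewrite ?iffalse ?iftrue in e.

Lemma key (H : 'M[algC]_dim6) hs l :
  H = \sum_(i < 6) \sum_(j < 6 | (i < j)%N) embed2 i j (hs i j) -> herm_op H ->
  adjM Pc *m H *m Pc = H -> adjM Rf *m H *m Rf = H ->
  H *m Psi6 = l *: Psi6 -> H *m ket0 = l *: ket0.
Proof.
move=> HE Hh HP HR HPsi.
have FH : forall x y, Hf H x y = Hb hs x y := Hf_Hb HE.
have Fs : forall x y, Hf H (fs sP x) (fs sP y) = Hf H x y by apply: perm_inv.
have Fr : forall x y, Hf H (fs sR x) (fs sR y) = Hf H x y by apply: perm_inv.
have Fh : forall x y, Hf H y x = (Hf H x y)^* := herm_entry Hh.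
have E := fun x => eig_entry x HPsi.
have e15 := E (bN 15).
rewrite /Plist !big_cons !big_nil in e15.
killi e15. killz FH e15.
rewrite (@FPairn _ _ FH 15 5 10 0 1 3 isT isT isT isT isT isT isT isT isT isT) in e15.
have g10_0 : Hf H (bN 10) (bN 0) = Hf H (bN 5) (bN 0) by apply: (@Gk _ Fs Fr 1 false); solve [bits_eq2].
rewrite g10_0 in e15.
rewrite (@FPairn _ _ FH 15 9 6 0 1 2 isT isT isT isT isT isT isT isT isT isT) in e15.
have g6_0 : Hf H (bN 6) (bN 0) = Hf H (bN 3) (bN 0) by apply: (@Gk _ Fs Fr 1 false); solve [bits_eq2].
rewrite g6_0 in e15.
rewrite (@FPairn _ _ FH 15 10 5 0 0 2 isT isT isT isT isT isT isT isT isT isT) in e15.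
have e58 := E (bN 58).
rewrite /Plist !big_cons !big_nil in e58.
killi e58. killz FH e58.
rewrite (@FPairn _ _ FH 58 10 48 0 4 5 isT isT isT isT isT isT isT isT isT isT) in e58.
have g48_0 : Hf H (bN 48) (bN 0) = Hf H (bN 3) (bN 0) by apply: (@Gk _ Fs Fr 4 false); solve [bits_eq2].
rewrite g48_0 in e58.
rewrite (@FPairn _ _ FH 58 18 40 0 3 5 isT isT isT isT isT isT isT isT isT isT) in e58.
have g40_0 : Hf H (bN 40) (bN 0) = Hf H (bN 5) (bN 0) by apply: (@Gk _ Fs Fr 3 false); solve [bits_eq2].
rewrite g40_0 in e58.
rewrite (@FPairn _ _ FH 58 34 24 0 3 4 isT isT isT isT isT isT isT isT isT isT) in e58.
have g24_0 : Hf H (bN 24) (bN 0) = Hf H (bN 3) (bN 0) by apply: (@Gk _ Fs Fr 3 false); solve [bits_eq2].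
rewrite g24_0 in e58.
rewrite (@FPairn _ _ FH 58 40 18 0 1 4 isT isT isT isT isT isT isT isT isT isT) in e58.
have g18_0 : Hf H (bN 18) (bN 0) = Hf H (bN 9) (bN 0) by apply: (@Gk _ Fs Fr 1 false); solve [bits_eq2].
rewrite g18_0 in e58.
have e54 := E (bN 54).
rewrite /Plist !big_cons !big_nil in e54.
killi e54. killz FH e54.
rewrite (@FPairn _ _ FH 54 18 36 0 2 5 isT isT isT isT isT isT isT isT isT isT) in e54.
have g36_0 : Hf H (bN 36) (bN 0) = Hf H (bN 9) (bN 0) by apply: (@Gk _ Fs Fr 2 false); solve [bits_eq2].
rewrite g36_0 in e54.
rewrite (@FPairn _ _ FH 54 34 20 0 2 4 isT isT isT isT isT isT isT isT isT isT) in e54.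
have g20_0 : Hf H (bN 20) (bN 0) = Hf H (bN 5) (bN 0) by apply: (@Gk _ Fs Fr 2 false); solve [bits_eq2].
rewrite g20_0 in e54.
rewrite (@FPairn _ _ FH 54 20 34 0 1 5 isT isT isT isT isT isT isT isT isT isT) in e54.
have g34_0 : Hf H (bN 34) (bN 0) = Hf H (bN 5) (bN 0) by apply: (@Gk _ Fs Fr 5 false); solve [bits_eq2].
rewrite g34_0 in e54.
rewrite (@FPairn _ _ FH 54 36 18 0 1 4 isT isT isT isT isT isT isT isT isT isT) in e54.
rewrite g18_0 in e54.
have e7 := E (bN 7).
rewrite /Plist !big_cons !big_nil in e7.
killi e7. killz FH e7.
have af7_5 := aff_rw (@FAffn _ _ FH 2 0 1 0 2 7 5 3 1 6 4 isT isT isT isT isT isT isT isT isT isT isT isT isT).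
rewrite af7_5 in e7.
have g6_4 : Hf H (bN 6) (bN 4) = Hf H (bN 3) (bN 1) by apply: (@Gk _ Fs Fr 3 true); solve [bits_eq2].
rewrite g6_4 in e7.
have g2_0 : Hf H (bN 2) (bN 0) = Hf H (bN 1) (bN 0) by apply: (@Gk _ Fs Fr 1 false); solve [bits_eq2].
rewrite g2_0 in e7.
have e11 := E (bN 11).
rewrite /Plist !big_cons !big_nil in e11.
killi e11. killz FH e11.
have af11_9 := aff_rw (@FAffn _ _ FH 2 0 1 0 3 11 9 3 1 10 8 isT isT isT isT isT isT isT isT isT isT isT isT isT).
rewrite af11_9 in e11.
have g10_8 : Hf H (bN 10) (bN 8) = Hf H (bN 5) (bN 1) by apply: (@Gk _ Fs Fr 2 true); solve [bits_eq2].
rewrite g10_8 in e11.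
rewrite g2_0 in e11.
have af11_10 := aff_rw (@FAffn _ _ FH 1 0 0 1 3 11 10 3 2 9 8 isT isT isT isT isT isT isT isT isT isT isT isT isT).
rewrite af11_10 in e11.
have g3_2 : Hf H (bN 3) (bN 2) = Hf H (bN 3) (bN 1) by apply: (@Gk _ Fs Fr 4 true); solve [bits_eq2].
rewrite g3_2 in e11.
have g9_8 : Hf H (bN 9) (bN 8) = Hf H (bN 9) (bN 1) by apply: (@Gk _ Fs Fr 3 false); solve [bits_eq2].
rewrite g9_8 in e11.
have e21 := E (bN 21).
rewrite /Plist !big_cons !big_nil in e21.
killi e21. killz FH e21.
have af21_5 := aff_rw (@FAffn _ _ FH 16 0 4 0 2 21 5 17 1 20 4 isT isT isT isT isT isT isT isT isT isT isT isT isT).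
rewrite af21_5 in e21.
have g17_1 : Hf H (bN 17) (bN 1) = Hf H (bN 5) (bN 1) by apply: (@Gk _ Fs Fr 5 true); solve [bits_eq2].
rewrite g17_1 in e21.
have g20_4 : Hf H (bN 20) (bN 4) = Hf H (bN 5) (bN 1) by apply: (@Gk _ Fs Fr 2 false); solve [bits_eq2].
rewrite g20_4 in e21.
have g16_0 : Hf H (bN 16) (bN 0) = Hf H (bN 1) (bN 0) by apply: (@Gk _ Fs Fr 4 false); solve [bits_eq2].
rewrite g16_0 in e21.
have af21_17 := aff_rw (@FAffn _ _ FH 4 0 2 0 4 21 17 5 1 20 16 isT isT isT isT isT isT isT isT isT isT isT isT isT).
rewrite af21_17 in e21.
have g20_16 : Hf H (bN 20) (bN 16) = Hf H (bN 5) (bN 1) by apply: (@Gk _ Fs Fr 1 true); solve [bits_eq2].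
rewrite g20_16 in e21.
have g4_0 : Hf H (bN 4) (bN 0) = Hf H (bN 1) (bN 0) by apply: (@Gk _ Fs Fr 2 false); solve [bits_eq2].
rewrite g4_0 in e21.
have af21_20 := aff_rw (@FAffn _ _ FH 1 0 0 2 4 21 20 5 4 17 16 isT isT isT isT isT isT isT isT isT isT isT isT isT).
rewrite af21_20 in e21.
have g5_4 : Hf H (bN 5) (bN 4) = Hf H (bN 5) (bN 1) by apply: (@Gk _ Fs Fr 3 true); solve [bits_eq2].
rewrite g5_4 in e21.
have g17_16 : Hf H (bN 17) (bN 16) = Hf H (bN 5) (bN 1) by apply: (@Gk _ Fs Fr 4 false); solve [bits_eq2].
rewrite g17_16 in e21.
have e1 := E (bN 1).
rewrite /Plist !big_cons !big_nil in e1.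
killi e1. killz FH e1.
rewrite (Fh (bN 5) (bN 1)) in e1.
rewrite (Fh (bN 9) (bN 1)) in e1.
rewrite (Fh (bN 17) (bN 1)) in e1.
rewrite g17_1 in e1.
have e0 := E (bN 0).
rewrite /Plist !big_cons !big_nil in e0.
killi e0. killz FH e0.
rewrite (Fh (bN 5) (bN 0)) in e0.
rewrite (Fh (bN 9) (bN 0)) in e0.
rewrite (Fh (bN 17) (bN 0)) in e0.
have g17_0 : Hf H (bN 17) (bN 0) = Hf H (bN 5) (bN 0) by apply: (@Gk _ Fs Fr 4 false); solve [bits_eq2].
rewrite g17_0 in e0.
rewrite (Fh (bN 10) (bN 0)) in e0.
rewrite g10_0 in e0.
rewrite (Fh (bN 18) (bN 0)) in e0.
rewrite g18_0 in e0.
rewrite (Fh (bN 34) (bN 0)) in e0.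
rewrite g34_0 in e0.
rewrite (Fh (bN 20) (bN 0)) in e0.
rewrite g20_0 in e0.
rewrite (Fh (bN 36) (bN 0)) in e0.
rewrite g36_0 in e0.
rewrite (Fh (bN 40) (bN 0)) in e0.
rewrite g40_0 in e0.
have c15 : 2 * (Hf H (bN 5) (bN 0)) + (Hf H (bN 3) (bN 0)) = 0 by apply: (eq_lin e15); ring.
have c58 : 2 * (Hf H (bN 3) (bN 0)) + (Hf H (bN 5) (bN 0)) + (Hf H (bN 9) (bN 0)) = 0 by apply: (eq_lin e58); ring.
have c54 : 2 * (Hf H (bN 5) (bN 0)) + 2 * (Hf H (bN 9) (bN 0)) = 0 by apply: (eq_lin e54); ring.
have c7 : 2 * (Hf H (bN 3) (bN 1)) - (Hf H (bN 1) (bN 0)) = 0 by apply: (eq_lin e7); ring.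
have c11 : 2 * (Hf H (bN 3) (bN 1)) + (Hf H (bN 5) (bN 1)) + (Hf H (bN 9) (bN 1)) - 2 * (Hf H (bN 1) (bN 0)) = 0 by apply: (eq_lin e11); ring.
have c21 : 6 * (Hf H (bN 5) (bN 1)) - 3 * (Hf H (bN 1) (bN 0)) = 0 by apply: (eq_lin e21); ring.
have c1 : 3 * (Hf H (bN 1) (bN 0)) + 2 * (Hf H (bN 5) (bN 1))^* + (Hf H (bN 9) (bN 1))^* = 0 by apply: (eq_lin e1); ring.
have c0 : 3 * (Hf H (bN 0) (bN 0)) + 6 * (Hf H (bN 5) (bN 0))^* + 3 * (Hf H (bN 9) (bN 0))^* - 3 * l = 0 by apply: (eq_lin e0); ring.
have nz : forall (k : nat) (z : algC), (k != 0)%N -> k%:R * z = 0 -> z = 0.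
  by move=> k z k0 /eqP; rewrite mulf_eq0 pnatr_eq0 (negPf k0) /= => /eqP.
have A5z : (Hf H (bN 5) (bN 0)) = 0.
  apply: (nz 8%N) => //.
  have -> : 8%:R * (Hf H (bN 5) (bN 0)) = 4 * (2 * (Hf H (bN 5) (bN 0)) + (Hf H (bN 3) (bN 0))) - 2 * (2 * (Hf H (bN 3) (bN 0)) + (Hf H (bN 5) (bN 0)) + (Hf H (bN 9) (bN 0))) + (2 * (Hf H (bN 5) (bN 0)) + 2 * (Hf H (bN 9) (bN 0))) by ring.
  by rewrite c15 c58 c54; ring.
have A3z : (Hf H (bN 3) (bN 0)) = 0.
  have -> : (Hf H (bN 3) (bN 0)) = (2 * (Hf H (bN 5) (bN 0)) + (Hf H (bN 3) (bN 0))) - 2 * (Hf H (bN 5) (bN 0)) by ring.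
  by rewrite c15 A5z; ring.
have A9z : (Hf H (bN 9) (bN 0)) = 0.
  apply: (nz 2%N) => //.
  have -> : 2%:R * (Hf H (bN 9) (bN 0)) = (2 * (Hf H (bN 5) (bN 0)) + 2 * (Hf H (bN 9) (bN 0))) - 2 * (Hf H (bN 5) (bN 0)) by ring.
  by rewrite c54 A5z; ring.
have hC2 : 2 * (Hf H (bN 5) (bN 1)) = (Hf H (bN 1) (bN 0)).
  apply/eqP; rewrite -subr_eq0; apply/eqP; apply: (nz 3%N) => //.
  have -> : 3%:R * (2 * (Hf H (bN 5) (bN 1)) - (Hf H (bN 1) (bN 0))) = 6 * (Hf H (bN 5) (bN 1)) - 3 * (Hf H (bN 1) (bN 0)) by ring.
  exact: c21.
have hC3 : 2 * (Hf H (bN 9) (bN 1)) = (Hf H (bN 1) (bN 0)).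
  apply/eqP; rewrite -subr_eq0; apply/eqP.
  have -> : 2 * (Hf H (bN 9) (bN 1)) - (Hf H (bN 1) (bN 0)) = 2 * (2 * (Hf H (bN 3) (bN 1)) + (Hf H (bN 5) (bN 1)) + (Hf H (bN 9) (bN 1)) - 2 * (Hf H (bN 1) (bN 0))) - 2 * (2 * (Hf H (bN 3) (bN 1)) - (Hf H (bN 1) (bN 0))) - (2 * (Hf H (bN 5) (bN 1)) - (Hf H (bN 1) (bN 0))) by ring.
  by rewrite c11 c7 hC2; ring.
have cj : forall z : algC, (2 * z)^* = 2 * z^*.
  by move=> z; rewrite rmorphM /= conjC_nat.
have hB1 : 2 * (Hf H (bN 1) (bN 0)) + (Hf H (bN 1) (bN 0))^* = 0.
  apply: (nz 3%N) => //.
  have -> : 3%:R * (2 * (Hf H (bN 1) (bN 0)) + (Hf H (bN 1) (bN 0))^*) = 2 * (3 * (Hf H (bN 1) (bN 0)) + 2 * (Hf H (bN 5) (bN 1))^* + (Hf H (bN 9) (bN 1))^*) + 3 * (Hf H (bN 1) (bN 0))^* - 2 * (2 * (Hf H (bN 5) (bN 1)))^* - (2 * (Hf H (bN 9) (bN 1)))^*.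
    by rewrite !cj; ring.
  by rewrite c1 hC2 hC3; ring.
have Bz : (Hf H (bN 1) (bN 0)) = 0.
  have hB2 : 2 * (Hf H (bN 1) (bN 0))^* + (Hf H (bN 1) (bN 0)) = 0.
    by move: (congr1 (fun z : algC => z^*) hB1); rewrite rmorphD /= cj conjCK conjC0 addrC.
  apply: (nz 3%N) => //.
  have -> : 3%:R * (Hf H (bN 1) (bN 0)) = 2 * (2 * (Hf H (bN 1) (bN 0)) + (Hf H (bN 1) (bN 0))^*) - (2 * (Hf H (bN 1) (bN 0))^* + (Hf H (bN 1) (bN 0))) by ring.
  by rewrite hB1 hB2; ring.
have Dl : (Hf H (bN 0) (bN 0)) = l.
  move: c0; rewrite A5z A9z conjC0 => c0.
  apply/eqP; rewrite -subr_eq0; apply/eqP; apply: (nz 3%N) => //.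
  have -> : 3%:R * ((Hf H (bN 0) (bN 0)) - l) = 3 * (Hf H (bN 0) (bN 0)) + 6 * 0 + 3 * 0 - 3 * l by ring.
  exact: c0.

have z1 : Hf H (bN 1) (bN 0) = 0 := Bz.
have z2 : Hf H (bN 2) (bN 0) = 0 by rewrite (@Gk _ Fs Fr 1 false _ _ (bN 1) (bN 0)); [exact: Bz | solve [bits_eq2] | solve [bits_eq2]].
have z3 : Hf H (bN 3) (bN 0) = 0 := A3z.
have z4 : Hf H (bN 4) (bN 0) = 0 by rewrite (@Gk _ Fs Fr 2 false _ _ (bN 1) (bN 0)); [exact: Bz | solve [bits_eq2] | solve [bits_eq2]].
have z5 : Hf H (bN 5) (bN 0) = 0 := A5z.
have z6 : Hf H (bN 6) (bN 0) = 0 by rewrite (@Gk _ Fs Fr 1 false _ _ (bN 3) (bN 0)); [exact: A3z | solve [bits_eq2] | solve [bits_eq2]].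
have z8 : Hf H (bN 8) (bN 0) = 0 by rewrite (@Gk _ Fs Fr 3 false _ _ (bN 1) (bN 0)); [exact: Bz | solve [bits_eq2] | solve [bits_eq2]].
have z9 : Hf H (bN 9) (bN 0) = 0 := A9z.
have z10 : Hf H (bN 10) (bN 0) = 0 by rewrite (@Gk _ Fs Fr 1 false _ _ (bN 5) (bN 0)); [exact: A5z | solve [bits_eq2] | solve [bits_eq2]].
have z12 : Hf H (bN 12) (bN 0) = 0 by rewrite (@Gk _ Fs Fr 2 false _ _ (bN 3) (bN 0)); [exact: A3z | solve [bits_eq2] | solve [bits_eq2]].
have z16 : Hf H (bN 16) (bN 0) = 0 by rewrite (@Gk _ Fs Fr 4 false _ _ (bN 1) (bN 0)); [exact: Bz | solve [bits_eq2] | solve [bits_eq2]].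
have z17 : Hf H (bN 17) (bN 0) = 0 by rewrite (@Gk _ Fs Fr 4 false _ _ (bN 5) (bN 0)); [exact: A5z | solve [bits_eq2] | solve [bits_eq2]].
have z18 : Hf H (bN 18) (bN 0) = 0 by rewrite (@Gk _ Fs Fr 1 false _ _ (bN 9) (bN 0)); [exact: A9z | solve [bits_eq2] | solve [bits_eq2]].
have z20 : Hf H (bN 20) (bN 0) = 0 by rewrite (@Gk _ Fs Fr 2 false _ _ (bN 5) (bN 0)); [exact: A5z | solve [bits_eq2] | solve [bits_eq2]].
have z24 : Hf H (bN 24) (bN 0) = 0 by rewrite (@Gk _ Fs Fr 3 false _ _ (bN 3) (bN 0)); [exact: A3z | solve [bits_eq2] | solve [bits_eq2]].
have z32 : Hf H (bN 32) (bN 0) = 0 by rewrite (@Gk _ Fs Fr 5 false _ _ (bN 1) (bN 0)); [exact: Bz | solve [bits_eq2] | solve [bits_eq2]].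
have z33 : Hf H (bN 33) (bN 0) = 0 by rewrite (@Gk _ Fs Fr 5 false _ _ (bN 3) (bN 0)); [exact: A3z | solve [bits_eq2] | solve [bits_eq2]].
have z34 : Hf H (bN 34) (bN 0) = 0 by rewrite (@Gk _ Fs Fr 5 false _ _ (bN 5) (bN 0)); [exact: A5z | solve [bits_eq2] | solve [bits_eq2]].
have z36 : Hf H (bN 36) (bN 0) = 0 by rewrite (@Gk _ Fs Fr 2 false _ _ (bN 9) (bN 0)); [exact: A9z | solve [bits_eq2] | solve [bits_eq2]].
have z40 : Hf H (bN 40) (bN 0) = 0 by rewrite (@Gk _ Fs Fr 3 false _ _ (bN 5) (bN 0)); [exact: A5z | solve [bits_eq2] | solve [bits_eq2]].
have z48 : Hf H (bN 48) (bN 0) = 0 by rewrite (@Gk _ Fs Fr 4 false _ _ (bN 3) (bN 0)); [exact: A3z | solve [bits_eq2] | solve [bits_eq2]].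
apply/colP => a; rewrite -[a]enum_valK; move: (enum_val a) => x.
rewrite mulket mxE /ket0 /ket /vecOf mxE enum_rankK z0.
move: x; apply: bits_all => n n64.
do 64 (case: n n64 => [? | n n64]; first by solve_case FH).
by [].
Qed.
Theorem mainTheorem8 :
  ~ exists H : 'M[algC]_dim6,
      [/\ two_body H, herm_op H,
          (forall G, inG6 G -> adjM G *m H *m G = H) &
          unique_ground_state H Psi6].
Proof.
case=> H [[hs HE] Hh Hinv [l [_ _ Hiff]]].
have HP : adjM Pc *m H *m Pc = H by move: (Hinv _ (inG6_Pc inG6_1)); rewrite mulmx1.
have HR : adjM Rf *m H *m Rf = H by move: (Hinv _ (inG6_Rf inG6_1)); rewrite mulmx1.
have HPsi : H *m Psi6 = l *: Psi6 by apply/Hiff; exists 1; rewrite scale1r.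
have K := key HE Hh HP HR HPsi.
have [c Hc] := (Hiff ket0).1 K.
have ea : ket0 (enum_rank (bN 5)) 0 = c * Psi6 (enum_rank (bN 5)) 0 by rewrite Hc mxE.
have eb : ket0 (enum_rank (bN 0)) 0 = c * Psi6 (enum_rank (bN 0)) 0 by rewrite Hc mxE.
move: ea eb; rewrite !psi_entry /Plist !big_cons !big_nil.
rewrite /ket0 /ket /vecOf !mxE !enum_rankK z0.
killig => ea eb.
have s0 : sqrtC 2 != 0 :> algC by rewrite sqrtC_eq0 pnatr_eq0.
have c0 : c = 0.
  apply/eqP; move/eqP: ea; rewrite eq_sym !addr0 mulr1 add0r !mulf_eq0 !invr_eq0 (negPf s0) pnatr_eq0 /=.
  by rewrite orbF.
by move: eb; rewrite c0 mul0r => /eqP; rewrite oner_eq0.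
Qed.
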